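(* Let $\mathbb{F}_q$ be a finite field with $q$ elements and let $I\subset\mathbb{F}_q[x_1,\ldots,x_n]$ be a zero-dimensional ideal with irredundant primary decomposition $I=I_1\cap\cdots\cap I_t$. For $i=1,\ldots,t$ let $J_i=I_1\cap\cdots\cap I_{i-1}\cap I_{i+1}\cap\cdots\cap I_t$. Let $\Psi_I:\mathbb{F}_q[\mathbf{x}]/I\to\mathbb{F}_q[\mathbf{x}]/I$ be the $\mathbb{F}_q$-linear map $\Psi_I(\bar f)=\bar f^{\,q}-\bar f$. Then there exist $h_1,\ldots,h_t$ with $h_i\in J_i\setminus I_i$ and $\bar h_i^{\,2}=\bar h_i$ for each $i$, such that $\mathrm{Ker}(\Psi_I)$ is a direct product of one-dimensional $\mathbb{F}_q$-algebras $$\mathrm{Ker}(\Psi_I)=\langle\bar h_1\rangle\oplus\cdots\oplus\langle\bar h_t\rangle.$$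
   Context: An ideal $I$ is zero-dimensional if $\mathbb{F}_q[\mathbf{x}]/I$ is a finite-dimensional $\mathbb{F}_q$-vector space. $\bar h$ denotes the class of $h$ in $\mathbb{F}_q[\mathbf{x}]/I$; $\langle\bar h_i\rangle$ denotes the one-dimensional $\mathbb{F}_q$-subspace $\mathbb{F}_q\bar h_i$, and the decomposition is an internal direct sum of these subalgebras inside $\mathbb{F}_q[\mathbf{x}]/I$. For $t=1$, $J_1=\mathbb{F}_q[\mathbf{x}]$. *)

(* Defs.v *)
From HB Require Import structures.
From mathcomp Require Import all_boot all_algebra all_field.
From mathcomp Require Import mpoly.
Set Implicit Arguments. Unset Strict Implicit. Unset Printing Implicit Defensive.
Import GRing.Theory.
Local Open Scope ring_scope.

Section Ideals.
Variable R : comRingType.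

Definition is_ideal (I : R -> Prop) : Prop :=
  [/\ I 0, (forall a b, I a -> I b -> I (a + b)) & (forall r a, I a -> I (r * a))].

Definition radical (I : R -> Prop) : R -> Prop := fun f => exists m : nat, I (f ^+ m).

Definition is_primary (Q : R -> Prop) : Prop :=
  [/\ is_ideal Q, ~ Q 1 &
      forall a b, Q (a * b) -> ~ Q a -> exists m : nat, Q (b ^+ m)].

Definition irredundant_primary_decomposition (t : nat) (I : R -> Prop)
    (Q : 'I_t -> R -> Prop) : Prop :=
  [/\ forall f, I f <-> (forall i, Q i f),
      forall i, is_primary (Q i),
      forall i j, i != j -> exists f, ~ (radical (Q i) f <-> radical (Q j) f)
    & forall i, ~ (forall f, (forall j, j != i -> Q j f) -> Q i f)].

(* intersection of all components except the i-th (whole ring when t = 1) *)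
Definition Jcomp (t : nat) (Q : 'I_t -> R -> Prop) (i : 'I_t) : R -> Prop :=
  fun f => forall j, j != i -> Q j f.
End Ideals.

(* I is zero-dimensional: R/I is a finite-dimensional F-vector space, i.e. the
   classes of finitely many elements span R/I over F. *)
Definition zero_dimensional (F : fieldType) (n : nat) (I : {mpoly F[n]} -> Prop) : Prop :=
  exists s : seq {mpoly F[n]}, forall f : {mpoly F[n]},
    exists c : 'I_(size s) -> F, I (f - \sum_(k < size s) c k *: s`_k).

(* Main.v *)
Require Import Defs.
From HB Require Import structures.
From mathcomp Require Import all_boot all_algebra all_field.
From mathcomp Require Import mpoly.
From Stdlib Require Import Classical.
Set Implicit Arguments. Unset Strict Implicit.
Import GRing.Theory.
Local Open Scope ring_scope.

Section Id.
Variables (R : comRingType) (Q : R -> Prop) (hQ : is_ideal Q).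

Lemma idl0 : Q 0. Proof. by case: hQ. Qed.
Lemma idlD {a b} : Q a -> Q b -> Q (a + b). Proof. by case: hQ => _ H _; apply: H. Qed.
Lemma idlMl {r a} : Q a -> Q (r * a). Proof. by case: hQ => _ _ H; apply: H. Qed.
Lemma idlMr {r a} : Q a -> Q (a * r). Proof. by rewrite mulrC; apply: idlMl. Qed.
Lemma idlN {a} : Q a -> Q (- a). Proof. by move=> Ha; rewrite -mulN1r; apply: idlMl. Qed.
Lemma idlB {a b} : Q a -> Q b -> Q (a - b). Proof. by move=> Ha Hb; apply: idlD => //; apply: idlN. Qed.
Lemma idlE {a b} : Q a -> a = b -> Q b. Proof. by move=> H <-. Qed.
Lemma idlBC {a b} : Q (a - b) -> Q (b - a). Proof. by move=> H; rewrite -opprB; apply: idlN. Qed.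
Lemma idlBtr {a b c} : Q (a - b) -> Q (b - c) -> Q (a - c).
Proof. by move=> H1 H2; have := idlD H1 H2; rewrite addrA subrK. Qed.
Lemma idlX {x y m} : Q (x - y) -> Q (x ^+ m - y ^+ m).
Proof. by move=> H; rewrite subrXX; apply: idlMr. Qed.
Lemma idl_sum (I : Type) (r : seq I) (P : pred I) (F : I -> R) :
  (forall i, P i -> Q (F i)) -> Q (\sum_(i <- r | P i) F i).
Proof. by move=> H; apply: big_ind => //; [apply: idl0 | move=> ? ?; apply: idlD]. Qed.

Definition unitQ x := exists y, Q (x * y - 1).
Lemma unitQM x y : unitQ x -> unitQ y -> unitQ (x * y).
Proof.
move=> [u Hu] [v Hv]; exists (u * v).
have := idlD (@idlMr (y * v) _ Hu) Hv.
rewrite mulrBl mul1r addrA subrK mulrACA.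
by [].
Qed.
Lemma unitQ1 : unitQ 1. Proof. by exists 1; rewrite mulr1 subrr; apply: idl0. Qed.
Lemma unitQ_prod (I : Type) (r : seq I) (P : pred I) (F : I -> R) :
  (forall i, P i -> unitQ (F i)) -> unitQ (\prod_(i <- r | P i) F i).
Proof. by move=> H; apply: big_ind => //; [apply: unitQ1 | apply: unitQM]. Qed.
End Id.

Lemma genpoly_eval (F : finFieldType) n (f : {mpoly F[n]}) :
  f ^+ #|F| - f = \prod_(a : F) (f - a%:MP).
Proof.
have := congr1 (fun p => (map_poly (@mpolyC n F) p).[f]) (finField_genPoly F).
rewrite /= rmorphB /= map_polyXn map_polyX !hornerE => ->.
rewrite rmorph_prod horner_prod.
by apply: eq_bigr => a _; rewrite rmorphB /= map_polyX map_polyC !hornerE.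
Qed.

Section Main.
Variables (F : finFieldType) (n : nat).
Notation R := {mpoly F[n]}.

Lemma nil_sub_unit (Q : R -> Prop) (x : R) (m : nat) (d : F) :
  is_ideal Q -> Q (x ^+ m) -> d != 0 -> unitQ Q (x - d%:MP).
Proof.
move=> hQ Hm dn0.
exists ((\sum_(i < m) x ^+ (m.-1 - i) * d%:MP ^+ i) * (- (d ^+ m)^-1)%:MP).
have E : (x - d%:MP) * ((\sum_(i < m) x ^+ (m.-1 - i) * d%:MP ^+ i) * (- (d ^+ m)^-1)%:MP) - 1
   = x ^+ m * (- (d ^+ m)^-1)%:MP.
  rewrite mulrA -subrXX mulrBl -rmorphXn -rmorphM mulrN mulfV ?expf_neq0 //.
  by rewrite rmorphN1 opprK addrK.
by rewrite E; apply: idlMr.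
Qed.

Lemma pickroot (Q : R -> Prop) (f : R) :
  is_primary Q -> (forall g, unitQ Q g \/ exists m, Q (g ^+ m)) ->
  Q (f ^+ #|F| - f) -> exists a, Q (f - a%:MP).
Proof.
move=> [hQ hn1 _] loc; rewrite genpoly_eval => H.
case: (classic (exists a, ~ unitQ Q (f - a%:MP))) => [[a Ha]|Hall].
  case: (loc (f - a%:MP)) => // [[m Hm]].
  have U : unitQ Q (\prod_(b | b != a) (f - b%:MP)).
    apply: unitQ_prod => // b nb.
    have -> : f - b%:MP = (f - a%:MP) - (b - a)%:MP by rewrite rmorphB /= opprB addrA subrK.
    by apply: nil_sub_unit Hm _ => //; rewrite subr_eq0.
  case: U => y Hy; exists a.
  rewrite (bigD1 a) //= in H.
  have := idlB hQ (idlMr hQ (r:=y) H) (idlMl hQ (r:=f - a%:MP) Hy).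
  by rewrite -mulrA mulrBr mulr1 opprB addrC subrK.
exfalso; apply: hn1.
have U : unitQ Q (\prod_(a : F) (f - a%:MP)).
  apply: unitQ_prod => // a _; apply: NNPP => Hn; apply: Hall; by exists a.
case: U => y Hy.
have := idlB hQ (idlMr hQ (r:=y) H) Hy.
by rewrite opprB addrC subrK.
Qed.

Lemma localQ (I Q : R -> Prop) :
  is_ideal I -> zero_dimensional I -> is_primary Q -> (forall f, I f -> Q f) ->
  forall g, unitQ Q g \/ exists m, Q (g ^+ m).
Proof.
move=> hI [s hs] [hQ hn1 hpr] hIQ f.
pose N := #|{ffun 'I_(size s) -> F}|.
have : forall k : 'I_N.+1, exists c : {ffun 'I_(size s) -> F},
    I (f ^+ k - \sum_(j < size s) c j *: s`_j).
  move=> k; case: (hs (f ^+ k)) => c Hc; exists [ffun j => c j].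
  by under eq_bigr do rewrite ffunE.
case/fin_all_exists => phi Hphi.
have : ~~ injectiveb phi.
  apply/negP => /injectiveP inj; have := leq_card _ inj; by rewrite card_ord ltnn.
case/injectivePn => k1 [k2 neq eqphi].
have Hd : Q (f ^+ k1 - f ^+ k2).
  apply: hIQ; have := idlB hI (Hphi k1) (Hphi k2); rewrite eqphi.
  by rewrite opprB addrA subrK.
have key : forall a b : nat, (a < b)%N -> Q (f ^+ a - f ^+ b) ->
    unitQ Q f \/ exists m, Q (f ^+ m).
  move=> a b ltab Hab.
  move: Hab; rewrite -(subnKC (ltnW ltab)).
  case E: (b - a)%N => [|d]; first by move: ltab; rewrite -subn_gt0 E.
  rewrite exprD -{1}(mulr1 (f ^+ a)) -mulrBr => Hab.
  case: (classic (Q (1 - f ^+ d.+1))) => H1.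
    left; exists (f ^+ d).
    by rewrite -exprS -opprB; apply: idlN.
  right; rewrite mulrC in Hab; case: (hpr _ _ Hab H1) => m Hm.
  by exists (a * m)%N; rewrite exprM.
case: (ltngtP k1 k2) => [lt|gt|eq].
- exact: key lt Hd.
- by apply: key gt _; apply: idlBC.
- by move: neq; rewrite (val_inj eq) eqxx.
Qed.
End Main.

Theorem theorem3 (F : finFieldType) (n t : nat)
    (I : {mpoly F[n]} -> Prop) (Q : 'I_t -> {mpoly F[n]} -> Prop) :
  is_ideal I ->
  zero_dimensional I ->
  irredundant_primary_decomposition I Q ->
  exists h : 'I_t -> {mpoly F[n]},
    [/\ forall i, Jcomp Q i (h i) /\ ~ Q i (h i),
        forall i, I ((h i) ^+ 2 - h i),
        forall f : {mpoly F[n]}, I (f ^+ #|F| - f) <->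
          exists c : 'I_t -> F, I (f - \sum_(i < t) c i *: h i)
      & forall c : 'I_t -> F, I (\sum_(i < t) c i *: h i) -> forall i, c i = 0].
Proof.
move=> hI hz [hdec hprim hrad _].
have hIQ i f : I f -> Q i f by move/hdec.
have hQ i : is_ideal (Q i) by case: (hprim i).
have hn1 i : ~ Q i 1 by case: (hprim i).
have loc i := localQ hI hz (hprim i) (hIQ i).
have sep i j g : radical (Q i) g -> ~ radical (Q j) g ->
    exists e, Q i e /\ Q j (1 - e).
  move=> [m Hm] Hn; case: (loc j g) => [[y Hy]|Hnil]; last by exfalso; apply: Hn.
  exists ((g * y) ^+ m); split; first by rewrite exprMn; apply: idlMr.
  apply: (idlBC (hQ j)); have := idlX (hQ j) (m:=m) Hy; by rewrite expr1n.
have comax i j : i != j -> exists b, Q j b /\ Q i (1 - b).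
  move=> neq; case: (hrad i j neq) => g Hg.
  case: (classic (radical (Q i) g)) => Hi; case: (classic (radical (Q j) g)) => Hj.
  - by exfalso; apply: Hg.
  - case: (sep i j g Hi Hj) => e [He1 He2]; exists (1 - e); split => //.
    by rewrite opprB addrC subrK.
  - case: (sep j i g Hj Hi) => e [He1 He2]; by exists e.
  - by exfalso; apply: Hg.
have hdef i : exists h, (forall j, j != i -> Q j h) /\ Q i (h - 1).
  have : forall j, exists b, j != i -> Q j b /\ Q i (1 - b).
    move=> j; case: (boolP (j == i)) => [/eqP ->|ne]; first by exists 0 => /eqP[].
    by case: (comax i j _); rewrite 1?eq_sym // => b Hb; exists b.
  case/fin_all_exists => b Hb; exists (\prod_(j | j != i) b j); split.
    by move=> j ne; rewrite (bigD1 j) //=; apply: idlMr; case: (Hb j ne).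
  apply: (big_ind (fun x => Q i (x - 1))).
  - by rewrite subrr; apply: idl0.
  - move=> x y Hx Hy; have := idlD (hQ i) (idlMr (hQ i) (r:=y) Hx) Hy.
    by rewrite mulrBl mul1r addrA subrK.
  - by move=> j ne; apply: (idlBC (hQ i)); case: (Hb j ne).
case/fin_all_exists: hdef => h Hh.
have L (c : 'I_t -> F) j : Q j (\sum_(i < t) c i *: h i - (c j)%:MP).
  have Hj : Q j (h j - 1) by case: (Hh j).
  have Hs : Q j (\sum_(i < t | i != j) c i *: h i).
    apply: (idl_sum (hQ j)) => i ne; rewrite -mul_mpolyC; apply: (idlMl (hQ j)).
    by case: (Hh i) => H _; apply: H; rewrite eq_sym.
  rewrite (bigD1 j) //= addrAC; apply: (idlD (hQ j)) Hs.
  have -> : c j *: h j - (c j)%:MP = (c j)%:MP * (h j - 1) by rewrite mulrBr mulr1 mul_mpolyC.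
  by apply: (idlMl (hQ j)).
exists h; split.
- move=> i; split; first by case: (Hh i).
  move=> Hq; apply: (hn1 i); case: (Hh i) => _ H1.
  by have := idlB (hQ i) Hq H1; rewrite opprB addrC subrK.
- move=> i; apply/hdec => j; rewrite expr2 -{3}(mulr1 (h i)) -mulrBr.
  case: (boolP (j == i)) => [/eqP ->|ne].
    by apply: (idlMl (hQ i)); case: (Hh i).
  by apply: (idlMr (hQ j)); case: (Hh i) => H _; apply: H.
- move=> f; split.
    move=> Hf.
    have : forall j, exists a, Q j (f - a%:MP).
      by move=> j; apply: pickroot (hprim j) (loc j) (hIQ j _ Hf).
    case/fin_all_exists => a Ha; exists a; apply/hdec => j.
    have := idlBtr (hQ j) (Ha j) (idlBC (hQ j) (L a j)).
    exact.
  case=> c Hc; apply/hdec => j.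
  have Hfj := idlBtr (hQ j) (hIQ j _ Hc) (L c j).
  have := idlX (hQ j) (m:=#|F|) Hfj; rewrite -rmorphXn (expf_card (c j)) => H2.
  by have := idlB (hQ j) H2 Hfj; rewrite opprB addrA subrK.
- move=> c Hc i; have := idlB (hQ i) (hIQ i _ Hc) (L c i).
  rewrite opprB addrC subrK => Hci.
  apply/eqP; apply: contraT => ne; exfalso; apply: (hn1 i).
  have := idlMl (hQ i) (r:=((c i)^-1)%:MP) Hci.
  by rewrite -mpolyCM (mulVf ne) mpolyC1.
Qed.
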